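(* Let $n \in \mathbb{Z}_{\geq 0}$, $k \in \mathbb{Z}_{\geq 1}$, $m_1,\dots,m_k\in\mathbb{Z}_{\geq 2}$, and let \[ G = \langle e_1, \ldots, e_k, h_1, \ldots, h_{2n} \mid e_1^{m_1} = \cdots = e_k^{m_k} = 1 \rangle , \] and assume that $G$ is neither cyclic nor isomorphic to $\mathbb{Z}_2\ast\mathbb{Z}_2$. Let $F$ be the subgroup of $G$ generated by $S_1\cup S_2$ (defined below). Then $F$ is a free group and $[G:F]=m_1\cdots m_k$.
   Context: Notation: $[l]=\{1,\dots,l\}$ for $l\in\mathbb{Z}_{>0}$; $[g,h]=ghg^{-1}h^{-1}$ and ${}^{g}h = ghg^{-1}$. For $2\le t\le k$ set $\Lambda_t = \big(([m_1]\times\cdots\times[m_{t-1}])\setminus\{(m_1,\dots,m_{t-1})\}\big)\times[m_t-1]$ and $\Xi_t=[m_{t+1}]\times\cdots\times[m_k]$, where $\Xi_k=\{0\}$. For $\lambda=(u_1,\dots,u_t)\in\Lambda_t$ and $\xi=(u_{t+1},\dots,u_k)\in\Xi_t$ put $f_\lambda=[e_t^{u_t}, e_{t-1}^{u_{t-1}}\cdots e_1^{u_1}]$ and $g_\xi = e_k^{u_k}\cdots e_{t+1}^{u_{t+1}}$ (with $g_\xi=1$ for $\xi\in\Xi_k$). Set $S_1=\{{}^{g_\xi}f_\lambda \mid 2\le t\le k,\ \lambda\in\Lambda_t,\ \xi\in\Xi_t\}$ and $S_2=\{{}^{e_k^{i_k}\cdots e_1^{i_1}}h_l \mid l\in[2n],\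 (i_1,\dots,i_k)\in[m_1]\times\cdots\times[m_k]\}$. *)

(* Defs.v *)
From Stdlib Require Import Arith.

Record Grp := {
  carrier :> Type;
  gmul : carrier -> carrier -> carrier;
  gone : carrier;
  ginv : carrier -> carrier;
  gmulA : forall x y z, gmul x (gmul y z) = gmul (gmul x y) z;
  gmul1g : forall x, gmul gone x = x;
  gmulVg : forall x, gmul (ginv x) x = gone
}.

Arguments gmul {g}.
Arguments gone {g}.
Arguments ginv {g}.

Fixpoint gpow {G : Grp} (x : G) (n : nat) : G :=
  match n with O => gone | S n' => gmul x (gpow x n') end.

Definition gcomm {G : Grp} (g h : G) : G :=
  gmul g (gmul h (gmul (ginv g) (ginv h))).

Definition gconj {G : Grp} (g h : G) : G := gmul g (gmul h (ginv g)).

Definition is_hom {G H : Grp} (f : G -> H) : Prop :=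
  forall x y, f (gmul x y) = gmul (f x) (f y).

Inductive gen {G : Grp} (S : G -> Prop) : G -> Prop :=
| gen_in : forall x, S x -> gen S x
| gen_one : gen S gone
| gen_mul : forall x y, gen S x -> gen S y -> gen S (gmul x y)
| gen_inv : forall x, gen S x -> gen S (ginv x).

(* G, with distinguished elements e_1..e_k and h_1..h_{2n}, is the group
   < e_1..e_k, h_1..h_{2n} | e_j^{m_j} = 1 > (universal property of the
   presentation). *)
Definition is_presented (G : Grp) (k n : nat) (m : nat -> nat)
  (e h : nat -> G) : Prop :=
  (forall j, 1 <= j <= k -> gpow (e j) (m j) = gone) /\
  (forall (H : Grp) (a b : nat -> H),
     (forall j, 1 <= j <= k -> gpow (a j) (m j) = gone) ->
     exists f : G -> H, is_hom f /\
       (forall j, 1 <= j <= k -> f (e j) = a j) /\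
       (forall l, 1 <= l <= 2 * n -> f (h l) = b l)) /\
  (forall (H : Grp) (f1 f2 : G -> H), is_hom f1 -> is_hom f2 ->
     (forall j, 1 <= j <= k -> f1 (e j) = f2 (e j)) ->
     (forall l, 1 <= l <= 2 * n -> f1 (h l) = f2 (h l)) ->
     forall x, f1 x = f2 x).

Definition is_cyclic (G : Grp) : Prop :=
  exists g : G, forall x : G, gen (fun y => y = g) x.

(* G is isomorphic to Z_2 * Z_2 = < a, b | a^2 = b^2 = 1 >. *)
Definition iso_Z2_free_Z2 (G : Grp) : Prop :=
  exists a b : nat -> G, is_presented G 2 0 (fun _ => 2) a b.

(* B freely generates the subgroup <B> of G (universal property). *)
Definition free_basis {G : Grp} (B : G -> Prop) : Prop :=
  forall (H : Grp) (phi : G -> H),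
    (exists psi : G -> H,
       (forall x y, gen B x -> gen B y -> psi (gmul x y) = gmul (psi x) (psi y)) /\
       (forall x, B x -> psi x = phi x)) /\
    (forall psi1 psi2 : G -> H,
       (forall x y, gen B x -> gen B y -> psi1 (gmul x y) = gmul (psi1 x) (psi1 y)) ->
       (forall x y, gen B x -> gen B y -> psi2 (gmul x y) = gmul (psi2 x) (psi2 y)) ->
       (forall x, B x -> psi1 x = psi2 x) ->
       forall x, gen B x -> psi1 x = psi2 x).

Definition is_free_subgroup {G : Grp} (F : G -> Prop) : Prop :=
  exists B : G -> Prop, (forall x, F x <-> gen B x) /\ free_basis B.

(* [G : F] = N : there are exactly N left cosets x F. *)
Definition has_index {G : Grp} (F : G -> Prop) (N : nat) : Prop :=
  exists r : nat -> G,
    (forall x : G, exists i, i < N /\ F (gmul (ginv (r i)) x)) /\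
    (forall i j, i < N -> j < N -> F (gmul (ginv (r i)) (r j)) -> i = j).

(* e_j^{u_j} e_{j-1}^{u_{j-1}} ... e_{lo+1}^{u_{lo+1}}  (empty product = 1) *)
Fixpoint prod_down {G : Grp} (e : nat -> G) (u : nat -> nat) (lo j : nat) : G :=
  match j with
  | O => gone
  | S j' => if S j' <=? lo then gone
            else gmul (gpow (e (S j')) (u (S j'))) (prod_down e u lo j')
  end.

Definition f_lam {G : Grp} (e : nat -> G) (t : nat) (u : nat -> nat) : G :=
  gcomm (gpow (e t) (u t)) (prod_down e u 0 (t - 1)).

Definition g_xi {G : Grp} (e : nat -> G) (k t : nat) (u : nat -> nat) : G :=
  prod_down e u t k.

(* S_1: u encodes lambda = (u_1..u_t) in Lambda_t and xi = (u_{t+1}..u_k) in Xi_t *)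
Definition S1 {G : Grp} (k : nat) (m : nat -> nat) (e : nat -> G) (x : G) : Prop :=
  exists t (u : nat -> nat),
    2 <= t <= k /\
    (forall i, 1 <= i <= t - 1 -> 1 <= u i <= m i) /\
    (exists i, 1 <= i <= t - 1 /\ u i <> m i) /\
    1 <= u t <= m t - 1 /\
    (forall i, t + 1 <= i <= k -> 1 <= u i <= m i) /\
    x = gconj (g_xi e k t u) (f_lam e t u).

Definition S2 {G : Grp} (k n : nat) (m : nat -> nat) (e h : nat -> G) (x : G) : Prop :=
  exists l (i : nat -> nat),
    1 <= l <= 2 * n /\
    (forall j, 1 <= j <= k -> 1 <= i j <= m j) /\
    x = gconj (prod_down e i 0 k) (h l).

Fixpoint prod_m (m : nat -> nat) (k : nat) : nat :=
  match k with O => 1 | S k' => m (S k') * prod_m m k' end.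

(* Main.v *)
Require Import Defs.
From Stdlib Require Import Arith Lia Bool FunctionalExtensionality ProofIrrelevance ClassicalEpsilon Classical.



Lemma gmulgV (G : Grp) (x : G) : gmul x (ginv x) = gone.
Proof.
  rewrite <- (gmul1g G (gmul x (ginv x))).
  rewrite <- (gmulVg G (ginv x)) at 1.
  rewrite <- gmulA. rewrite (gmulA G (ginv x) x (ginv x)), gmulVg, gmul1g.
  apply gmulVg.
Qed.

Lemma gmulg1 (G : Grp) (x : G) : gmul x gone = x.
Proof. rewrite <- (gmulVg G x), gmulA, gmulgV, gmul1g. reflexivity. Qed.

Lemma gKl (G : Grp) (x y : G) : gmul (ginv x) (gmul x y) = y.
Proof. rewrite gmulA, gmulVg, gmul1g; reflexivity. Qed.
Lemma gKr (G : Grp) (x y : G) : gmul x (gmul (ginv x) y) = y.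
Proof. rewrite gmulA, gmulgV, gmul1g; reflexivity. Qed.

Lemma gcancel_l (G : Grp) (x y z : G) : gmul x y = gmul x z -> y = z.
Proof. intro H. rewrite <- (gKl G x y), H, gKl. reflexivity. Qed.

Lemma ginv_uniq (G : Grp) (x y : G) : gmul x y = gone -> y = ginv x.
Proof. intro H. apply (gcancel_l G x). rewrite H, gmulgV. reflexivity. Qed.

Lemma ginv_inv (G : Grp) (x : G) : ginv (ginv x) = x.
Proof. symmetry. apply ginv_uniq. apply gmulVg. Qed.

Lemma ginv_mul (G : Grp) (x y : G) : ginv (gmul x y) = gmul (ginv y) (ginv x).
Proof. symmetry. apply ginv_uniq. rewrite <- gmulA, (gmulA G y), gmulgV, gmul1g, gmulgV. reflexivity. Qed.

Lemma ginv_one (G : Grp) : ginv (@gone G) = gone.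
Proof. symmetry. apply ginv_uniq. apply gmul1g. Qed.

Lemma gKl' (G : Grp) (x y : G) : gmul x (gmul (ginv x) y) = y.
Proof. apply gKr. Qed.

Lemma gpow_comm (G : Grp) (x : G) n : gmul x (gpow x n) = gmul (gpow x n) x.
Proof.
  induction n; simpl. rewrite gmulg1, gmul1g; reflexivity.
  rewrite IHn at 1. rewrite gmulA. reflexivity.
Qed.

Lemma gpow_succ_r (G : Grp) (x : G) n : gpow x (S n) = gmul (gpow x n) x.
Proof. simpl. apply gpow_comm. Qed.

Lemma gpow_add (G : Grp) (x : G) a b : gpow x (a + b) = gmul (gpow x a) (gpow x b).
Proof. induction a; simpl. rewrite gmul1g; reflexivity. rewrite IHa, gmulA; reflexivity. Qed.


Lemma hom_one (G H : Grp) (f : G -> H) : is_hom f -> f gone = gone.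
Proof.
  intro Hf. apply (gcancel_l H (f gone)). rewrite <- Hf, gmul1g, gmulg1. reflexivity.
Qed.

Lemma hom_inv (G H : Grp) (f : G -> H) : is_hom f -> forall x, f (ginv x) = ginv (f x).
Proof.
  intros Hf x. apply ginv_uniq. rewrite <- Hf, gmulgV. apply hom_one; auto.
Qed.

Lemma hom_pow (G H : Grp) (f : G -> H) : is_hom f -> forall x n, f (gpow x n) = gpow (f x) n.
Proof.
  intros Hf x n; induction n; simpl. apply hom_one; auto. rewrite Hf, IHn. reflexivity.
Qed.


Definition subset_grp_car (G : Grp) (K : G -> Prop) := { x : G | K x }.

Lemma sub_eq (G : Grp) (K : G -> Prop) (a b : {x : G | K x}) : proj1_sig a = proj1_sig b -> a = b.
Proof.
  destruct a as [a pa], b as [b pb]; simpl; intro E. subst b. f_equal. apply proof_irrelevance.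
Qed.

Definition SubGrp (G : Grp) (K : G -> Prop) (K1 : K gone)
  (Km : forall x y, K x -> K y -> K (gmul x y)) (Ki : forall x, K x -> K (ginv x)) : Grp.
Proof.
  refine {| carrier := {x : G | K x};
            gmul := fun a b => exist _ (gmul (proj1_sig a) (proj1_sig b)) (Km _ _ (proj2_sig a) (proj2_sig b));
            gone := exist _ gone K1;
            ginv := fun a => exist _ (ginv (proj1_sig a)) (Ki _ (proj2_sig a)) |}.
  - intros. apply sub_eq; simpl. apply gmulA.
  - intros. apply sub_eq; simpl. apply gmul1g.
  - intros. apply sub_eq; simpl. apply gmulVg.
Defined.

Lemma sub_pow (G : Grp) K K1 Km Ki (a : SubGrp G K K1 Km Ki) n :
  proj1_sig (gpow a n) = gpow (proj1_sig a) n.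
Proof. induction n; simpl; auto. rewrite IHn; reflexivity. Qed.

Lemma generation (G : Grp) k n m e h : is_presented G k n m e h ->
  forall K : G -> Prop, K gone -> (forall x y, K x -> K y -> K (gmul x y)) ->
  (forall x, K x -> K (ginv x)) -> (forall j, 1 <= j <= k -> K (e j)) ->
  (forall l, 1 <= l <= 2 * n -> K (h l)) -> forall x, K x.
Proof.
  intros [Hrel [Hex Huniq]] K K1 Km Ki He Hh.
  set (S := SubGrp G K K1 Km Ki).
  set (a := fun j => match excluded_middle_informative (K (e j)) with
                     | left p => (exist _ (e j) p : S) | right _ => (gone : S) end).
  set (b := fun j => match excluded_middle_informative (K (h j)) with
                     | left p => (exist _ (h j) p : S) | right _ => (gone : S) end).
  assert (Ha : forall j, 1 <= j <= k -> proj1_sig (a j) = e j).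
  { intros j Hj. unfold a. destruct (excluded_middle_informative (K (e j))) as [p|np]; simpl; auto.
    exfalso; apply np; auto. }
  assert (Hb : forall j, 1 <= j <= 2 * n -> proj1_sig (b j) = h j).
  { intros j Hj. unfold b. destruct (excluded_middle_informative (K (h j))) as [p|np]; simpl; auto.
    exfalso; apply np; auto. }
  destruct (Hex S a b) as [f [Hf [Hfe Hfh]]].
  { intros j Hj. apply sub_eq. rewrite (sub_pow G K K1 Km Ki). simpl. rewrite Ha; auto. }
  assert (E := Huniq G (fun x => proj1_sig (f x)) (fun x => x)).
  intro x. rewrite <- E.
  - apply (proj2_sig (f x)).
  - intros u v. simpl. rewrite Hf. reflexivity.
  - intros u v; reflexivity.
  - intros j Hj. rewrite Hfe; auto.
  - intros j Hj. rewrite Hfh; auto.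
Qed.


Definition inr (k i : nat) : bool := (1 <=? i) && (i <=? k).
Definition nz (k : nat) (m : nat -> nat) (i x : nat) : nat := if inr k i then x mod m i else 0.

Lemma inr_true k i : inr k i = true <-> 1 <= i <= k.
Proof. unfold inr. rewrite Bool.andb_true_iff, !Nat.leb_le. tauto. Qed.
Lemma inr_false k i : inr k i = false <-> ~ (1 <= i <= k).
Proof. rewrite <- inr_true. destruct (inr k i); split; congruence || tauto. Qed.

Lemma nz_in k m i x : 1 <= i <= k -> nz k m i x = x mod m i.
Proof. intro H. unfold nz. apply inr_true in H. rewrite H. reflexivity. Qed.
Lemma nz_out k m i x : ~ (1 <= i <= k) -> nz k m i x = 0.
Proof. intro H. unfold nz. apply inr_false in H. rewrite H. reflexivity. Qed.

Lemma nz_idem k m i x : nz k m i (nz k m i x) = nz k m i x.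
Proof. unfold nz. destruct (inr k i); auto. apply Nat.Div0.mod_mod. Qed.

Lemma nz_addl k m i x y : nz k m i (nz k m i x + y) = nz k m i (x + y).
Proof. unfold nz. destruct (inr k i); auto. apply Nat.Div0.add_mod_idemp_l. Qed.
Lemma nz_addr k m i x y : nz k m i (x + nz k m i y) = nz k m i (x + y).
Proof. unfold nz. destruct (inr k i); auto. apply Nat.Div0.add_mod_idemp_r. Qed.

Definition Acar (k : nat) (m : nat -> nat) := { a : nat -> nat | forall i, nz k m i (a i) = a i }.
Definition av {k m} (a : Acar k m) : nat -> nat := proj1_sig a.
Definition mkA k m (f : nat -> nat) : Acar k m :=
  exist (fun a => forall i, nz k m i (a i) = a i) (fun i => nz k m i (f i)) (fun i => nz_idem k m i (f i)).

Lemma av_mkA k m f i : av (mkA k m f) i = nz k m i (f i).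
Proof. reflexivity. Qed.

Lemma A_ext k m (a b : Acar k m) : (forall i, av a i = av b i) -> a = b.
Proof.
  destruct a as [a pa], b as [b pb]; unfold av; simpl; intro E.
  assert (a = b) by (apply functional_extensionality; auto). subst b.
  f_equal. apply proof_irrelevance.
Qed.

Lemma av_norm k m (a : Acar k m) i : nz k m i (av a i) = av a i.
Proof. destruct a; simpl; auto. Qed.

Lemma av_out k m (a : Acar k m) i : ~ (1 <= i <= k) -> av a i = 0.
Proof. intro H. rewrite <- av_norm, nz_out; auto. Qed.

Lemma av_lt k m (a : Acar k m) i : 1 <= i <= k -> 0 < m i -> av a i < m i.
Proof. intros H Hp. rewrite <- av_norm, nz_in; auto. apply Nat.mod_upper_bound. lia. Qed.

Definition Aadd {k m} (a b : Acar k m) : Acar k m := mkA k m (fun i => av a i + av b i).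
Definition Azero k m : Acar k m := mkA k m (fun _ => 0).
Definition Aneg {k m} (a : Acar k m) : Acar k m := mkA k m (fun i => m i - av a i).

Definition Agrp (k : nat) (m : nat -> nat) (Hm : forall i, 1 <= i <= k -> 0 < m i) : Grp.
Proof.
  refine {| carrier := Acar k m; gmul := Aadd; gone := Azero k m; ginv := Aneg |}.
  - intros x y z. apply A_ext; intro i. unfold Aadd. rewrite !av_mkA.
    rewrite nz_addl, nz_addr, Nat.add_assoc. reflexivity.
  - intros x. apply A_ext; intro i. unfold Aadd, Azero. rewrite !av_mkA.
    unfold nz at 2. destruct (inr k i); rewrite ?Nat.Div0.mod_0_l; simpl; apply av_norm.
  - intros x. apply A_ext; intro i. unfold Aadd, Azero, Aneg. rewrite !av_mkA, nz_addl.
    destruct (inr k i) eqn:Ei.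
    + apply inr_true in Ei. rewrite !nz_in; auto.
      assert (av x i < m i) by (apply av_lt; auto).
      rewrite Nat.sub_add by lia. rewrite Nat.Div0.mod_same, Nat.Div0.mod_0_l. reflexivity.
    + apply inr_false in Ei. rewrite !nz_out; auto.
Defined.

Lemma Agrp_mul k m Hm (a b : Agrp k m Hm) i : av (gmul a b) i = nz k m i (av a i + av b i).
Proof. reflexivity. Qed.
Lemma Agrp_one k m Hm i : av (@gone (Agrp k m Hm)) i = 0.
Proof. change (nz k m i 0 = 0). unfold nz; destruct (inr k i); auto; apply Nat.Div0.mod_0_l. Qed.

Lemma Agrp_comm k m Hm (a b : Agrp k m Hm) : gmul a b = gmul b a.
Proof. apply A_ext; intro i. rewrite !Agrp_mul, Nat.add_comm. reflexivity. Qed.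

Definition Adelta k m (t : nat) : Acar k m := mkA k m (fun i => if i =? t then 1 else 0).

Lemma Agrp_pow_delta k m Hm t s i :
  av (gpow (G := Agrp k m Hm) (Adelta k m t) s) i = nz k m i (if i =? t then s else 0).
Proof.
  induction s; cbn [gpow].
  - rewrite (Agrp_one k m Hm). destruct (i =? t); unfold nz; destruct (inr k i); auto; symmetry; apply Nat.Div0.mod_0_l.
  - rewrite Agrp_mul, IHs. unfold Adelta. rewrite av_mkA, nz_addl, nz_addr.
    destruct (i =? t); auto.
Qed.


Definition Wmul {A H : Grp} (x y : A * (A -> H)) : A * (A -> H) :=
  (gmul (fst x) (fst y), fun z => gmul (snd x (gmul (fst y) z)) (snd y z)).
Definition Wone (A H : Grp) : A * (A -> H) := (gone, fun _ => gone).
Definition Winv {A H : Grp} (x : A * (A -> H)) : A * (A -> H) :=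
  (ginv (fst x), fun z => ginv (snd x (gmul (ginv (fst x)) z))).

Definition Wgrp (A H : Grp) : Grp.
Proof.
  refine {| carrier := A * (A -> H); gmul := Wmul; gone := Wone A H; ginv := Winv |}.
  - intros [a c] [b d] [g f]. unfold Wmul; simpl. f_equal. apply gmulA.
    apply functional_extensionality; intro z. rewrite gmulA, gmulA. reflexivity.
  - intros [a c]. unfold Wmul, Wone; simpl. rewrite gmul1g. f_equal.
    apply functional_extensionality; intro z. apply gmul1g.
  - intros [a c]. unfold Wmul, Wone, Winv; simpl. rewrite gmulVg. f_equal.
    apply functional_extensionality; intro z. rewrite gKl. apply gmulVg.
Defined.

Lemma W_fst_mul (A H : Grp) (x y : Wgrp A H) : fst (gmul x y) = gmul (fst x) (fst y).
Proof. reflexivity. Qed.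
Lemma W_snd_mul (A H : Grp) (x y : Wgrp A H) z : snd (gmul x y) z = gmul (snd x (gmul (fst y) z)) (snd y z).
Proof. reflexivity. Qed.
Lemma W_fst_inv (A H : Grp) (x : Wgrp A H) : fst (ginv x) = ginv (fst x).
Proof. reflexivity. Qed.
Lemma W_snd_inv (A H : Grp) (x : Wgrp A H) z : snd (ginv x) z = ginv (snd x (gmul (ginv (fst x)) z)).
Proof. reflexivity. Qed.
Lemma W_one (A H : Grp) : (@gone (Wgrp A H)) = (gone, fun _ => gone).
Proof. reflexivity. Qed.

Definition cob {A H : Grp} (Psi : A -> H) (al : A) : A -> H :=
  fun z => gmul (Psi (gmul al z)) (ginv (Psi z)).

Lemma W_pow_cob (A H : Grp) (Psi : A -> H) (al : A) n :
  gpow (G := Wgrp A H) (al, cob Psi al) n = (gpow al n, cob Psi (gpow al n)).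
Proof.
  induction n; cbn [gpow].
  - rewrite W_one. f_equal. apply functional_extensionality; intro z. unfold cob.
    rewrite gmul1g, gmulgV. reflexivity.
  - rewrite IHn. change (gmul (gmul al (gpow al n)) gone = gmul al (gpow al n)) || idtac.
    unfold gmul at 1; simpl. unfold Wmul; simpl. f_equal.
    apply functional_extensionality; intro z. unfold cob.
    rewrite <- gmulA, gKl, gmulA. reflexivity.
Qed.


Ltac gnorm := repeat progress (rewrite ?ginv_mul, ?ginv_inv, ?ginv_one, ?gmul1g, ?gmulg1;
   rewrite <- ?gmulA; rewrite ?gKl, ?gKr, ?gmulgV, ?gmulVg).

Lemma pd_empty (G : Grp) (e : nat -> G) u lo j : j <= lo -> prod_down e u lo j = gone.
Proof.
  destruct j; cbn [prod_down]; auto. intro H. assert (E : S j <=? lo = true) by (apply Nat.leb_le; lia).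
  rewrite E; reflexivity.
Qed.

Lemma pd_step (G : Grp) (e : nat -> G) u lo j : lo < S j ->
  prod_down e u lo (S j) = gmul (gpow (e (S j)) (u (S j))) (prod_down e u lo j).
Proof.
  intro H. cbn [prod_down]. assert (E : S j <=? lo = false) by (apply Nat.leb_gt; lia). rewrite E; reflexivity.
Qed.

Lemma pd_ext (G : Grp) (e : nat -> G) u v lo j : (forall i, lo < i <= j -> u i = v i) ->
  prod_down e u lo j = prod_down e v lo j.
Proof.
  induction j; intro H; cbn [prod_down]; auto.
  destruct (S j <=? lo) eqn:E; auto. apply Nat.leb_gt in E.
  rewrite H by lia. rewrite IHj; auto. intros; apply H; lia.
Qed.

Lemma pd_split (G : Grp) (e : nat -> G) u lo t j : lo <= t <= j ->
  prod_down e u lo j = gmul (prod_down e u t j) (prod_down e u lo t).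
Proof.
  induction j; intro H.
  - assert (t = 0) by lia. subst. rewrite (pd_empty _ _ _ 0 0) by lia. rewrite gmul1g; reflexivity.
  - destruct (Nat.eq_dec t (S j)) as [Et|Nt].
    + subst t. rewrite (pd_empty _ _ _ (S j) (S j)) by lia. rewrite gmul1g; reflexivity.
    + rewrite !pd_step by lia. rewrite IHj by lia. apply gmulA.
Qed.

Lemma pd_ones (G : Grp) (e : nat -> G) u lo j : (forall i, lo < i <= j -> gpow (e i) (u i) = gone) ->
  prod_down e u lo j = gone.
Proof.
  induction j; intro H; cbn [prod_down]; auto.
  destruct (S j <=? lo) eqn:E; auto. apply Nat.leb_gt in E.
  rewrite H by lia. rewrite IHj; auto. apply gmul1g. intros; apply H; lia.
Qed.

Lemma hom_pd (G H : Grp) (f : G -> H) (e : nat -> G) u lo j : is_hom f ->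
  f (prod_down e u lo j) = prod_down (fun i => f (e i)) u lo j.
Proof.
  intro Hf. induction j; cbn [prod_down]. apply hom_one; auto.
  destruct (S j <=? lo); auto. apply hom_one; auto. rewrite Hf, hom_pow, IHj; auto.
Qed.

Lemma gcomm_1l (G : Grp) (y : G) : gcomm gone y = gone.
Proof. unfold gcomm. gnorm. reflexivity. Qed.
Lemma gcomm_1r (G : Grp) (x : G) : gcomm x gone = gone.
Proof. unfold gcomm. gnorm. reflexivity. Qed.
Lemma gconj_1 (G : Grp) (x : G) : gconj x gone = gone.
Proof. unfold gconj. gnorm. reflexivity. Qed.

Lemma hom_gconj (G H : Grp) (f : G -> H) x y : is_hom f -> f (gconj x y) = gconj (f x) (f y).
Proof. intro Hf. unfold gconj. rewrite !Hf, hom_inv; auto. Qed.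
Lemma hom_gcomm (G H : Grp) (f : G -> H) x y : is_hom f -> f (gcomm x y) = gcomm (f x) (f y).
Proof. intro Hf. unfold gcomm. rewrite !Hf, !(hom_inv _ _ f Hf). reflexivity. Qed.

Lemma gcomm_abel (G : Grp) (x y : G) : (forall a b : G, gmul a b = gmul b a) -> gcomm x y = gone.
Proof. intro C. unfold gcomm. rewrite (C (ginv x) (ginv y)). gnorm. reflexivity. Qed.

Lemma pd_ext_e (G : Grp) (e e' : nat -> G) u lo j : (forall i, lo < i <= j -> e i = e' i) ->
  prod_down e u lo j = prod_down e' u lo j.
Proof.
  induction j; intro H; cbn [prod_down]; auto.
  destruct (S j <=? lo) eqn:E; auto. apply Nat.leb_gt in E.
  rewrite H by lia. rewrite IHj; auto. intros; apply H; lia.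
Qed.


Definition normk k m (f : nat -> nat) := forall i, nz k m i (f i) = f i.

Lemma nz_succ k m j x : j <> S k -> nz (S k) m j x = nz k m j x.
Proof.
  intro H. unfold nz. destruct (inr k j) eqn:E1, (inr (S k) j) eqn:E2; auto;
  first [apply inr_true in E1; apply inr_false in E2 | apply inr_false in E1; apply inr_true in E2]; lia.
Qed.

Lemma prod_m_pos k m : (forall i, 1 <= i <= k -> 0 < m i) -> 0 < prod_m m k.
Proof.
  induction k; simpl; intro H; auto. apply Nat.mul_pos_pos. apply H; lia. apply IHk; intros; apply H; lia.
Qed.

Lemma box_enum k m : (forall i, 1 <= i <= k -> 0 < m i) ->
  exists dec : nat -> nat -> nat,
    (forall f, normk k m f -> exists i, i < prod_m m k /\ dec i = f) /\
    (forall i j, i < prod_m m k -> j < prod_m m k -> dec i = dec j -> i = j) /\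
    (forall i, normk k m (dec i)).
Proof.
  induction k; intro Hm.
  - exists (fun _ _ => 0). split; [|split].
    + intros f Hf. exists 0. split; simpl; auto. apply functional_extensionality; intro i.
      rewrite <- Hf. rewrite nz_out; auto. lia.
    + simpl; intros; lia.
    + intros i j. unfold nz. destruct (inr 0 j); auto. apply Nat.Div0.mod_0_l.
  - destruct IHk as [dec [Hs [Hi Hn]]]. intros; apply Hm; lia.
    set (P := prod_m m k).
    assert (HP : 0 < P) by (apply prod_m_pos; intros; apply Hm; lia).
    assert (HmS : 0 < m (S k)) by (apply Hm; lia).
    exists (fun i j => if j =? S k then (i / P) mod m (S k) else dec (i mod P) j).
    split; [|split].
    + intros f Hf.
      destruct (Hs (fun j => if j =? S k then 0 else f j)) as [i' [Hi' Ei']].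
      { intro j. destruct (j =? S k) eqn:E. unfold nz; destruct (inr k j); auto; apply Nat.Div0.mod_0_l.
        apply Nat.eqb_neq in E. rewrite <- nz_succ; auto. }
      assert (Hfl : f (S k) < m (S k)).
      { rewrite <- Hf. rewrite nz_in by lia. apply Nat.mod_upper_bound. lia. }
      exists (i' + f (S k) * P). split.
      * simpl. fold P. nia.
      * apply functional_extensionality; intro j.
        rewrite Nat.div_add, Nat.div_small, Nat.Div0.mod_add, Nat.mod_small by lia.
        destruct (j =? S k) eqn:E.
        -- apply Nat.eqb_eq in E; subst. rewrite ?Nat.mod_small by lia. reflexivity.
        -- rewrite ?Nat.mod_small by lia. rewrite Ei', E. reflexivity.
    + intros i j Hi' Hj' E.
      assert (Ek : (i / P) mod m (S k) = (j / P) mod m (S k)).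
      { apply (f_equal (fun g => g (S k))) in E. rewrite Nat.eqb_refl in E. exact E. }
      simpl in Hi', Hj'. fold P in Hi', Hj'.
      rewrite !Nat.mod_small in Ek by (apply Nat.Div0.div_lt_upper_bound; lia).
      assert (Em : i mod P = j mod P).
      { apply Hi; try (apply Nat.mod_upper_bound; lia).
        apply functional_extensionality; intro x.
        destruct (x =? S k) eqn:Ex.
        - apply Nat.eqb_eq in Ex; subst x. rewrite <- (Hn (i mod P)), <- (Hn (j mod P)).
          rewrite !nz_out by lia. reflexivity.
        - apply (f_equal (fun g => g x)) in E. rewrite Ex in E. exact E. }
      rewrite (Nat.div_mod_eq i P), (Nat.div_mod_eq j P), Ek, Em. reflexivity.
    + intros i j. destruct (j =? S k) eqn:E.
      * apply Nat.eqb_eq in E; subst. rewrite nz_in by lia. apply Nat.Div0.mod_mod.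
      * apply Nat.eqb_neq in E. rewrite nz_succ; auto. apply Hn.
Qed.


Lemma nz_0 k m i : nz k m i 0 = 0.
Proof. unfold nz; destruct (inr k i); auto. apply Nat.Div0.mod_0_l. Qed.

Lemma A_pd_delta k m Hm u j i :
  av (prod_down (G := Agrp k m Hm) (fun t => Adelta k m t) u 0 j) i =
  nz k m i (if (1 <=? i) && (i <=? j) then u i else 0).
Proof.
  induction j.
  - cbn [prod_down]. rewrite (Agrp_one k m Hm). destruct ((1 <=? i) && (i <=? 0)) eqn:E.
    + apply Bool.andb_true_iff in E; destruct E as [E1 E2]; apply Nat.leb_le in E1, E2; lia.
    + symmetry; apply nz_0.
  - rewrite pd_step by lia. rewrite Agrp_mul, Agrp_pow_delta, IHj, nz_addl, nz_addr.
    f_equal.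
    destruct (i =? S j) eqn:E1.
    + apply Nat.eqb_eq in E1; subst i.
      assert (E2 : (1 <=? S j) && (S j <=? j) = false) by (apply Bool.andb_false_iff; right; apply Nat.leb_gt; lia).
      assert (E3 : (1 <=? S j) && (S j <=? S j) = true) by (apply Bool.andb_true_iff; split; apply Nat.leb_le; lia).
      rewrite E2, E3. lia.
    + rewrite Nat.add_0_l. apply Nat.eqb_neq in E1.
      destruct (1 <=? i) eqn:E2; cbn [andb]; auto.
      destruct (i <=? j) eqn:E3, (i <=? S j) eqn:E4; auto.
      all: try (apply Nat.leb_le in E3); try (apply Nat.leb_gt in E3);
           try (apply Nat.leb_le in E4); try (apply Nat.leb_gt in E4); try lia.
Qed.

Lemma A_delta_mul_other k m Hm t (b : Agrp k m Hm) i : i <> t ->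
  av (gmul (g := Agrp k m Hm) (Adelta k m t) b) i = av b i.
Proof.
  intro H. rewrite Agrp_mul. unfold Adelta. rewrite av_mkA, nz_addl.
  apply Nat.eqb_neq in H. rewrite H. simpl. apply av_norm.
Qed.

Lemma A_pow_delta_mul_other k m Hm t s (b : Agrp k m Hm) i : i <> t ->
  av (gmul (gpow (G := Agrp k m Hm) (Adelta k m t) s) b) i = av b i.
Proof.
  intro H. rewrite Agrp_mul, Agrp_pow_delta, nz_addl.
  apply Nat.eqb_neq in H. rewrite H. simpl. apply av_norm.
Qed.

Lemma A_delta_mul_self k m Hm t (b : Agrp k m Hm) : 1 <= t <= k ->
  av (gmul (g := Agrp k m Hm) (Adelta k m t) b) t = (1 + av b t) mod m t.
Proof.
  intro H. rewrite Agrp_mul. unfold Adelta. rewrite av_mkA, nz_addl, Nat.eqb_refl, nz_in; auto.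
Qed.

Lemma Agrp_inv k m Hm (a : Agrp k m Hm) i : av (ginv a) i = nz k m i (m i - av a i).
Proof. reflexivity. Qed.

Lemma gen_uniq (G H : Grp) (B : G -> Prop) (psi1 psi2 : G -> H) :
  (forall x y, gen B x -> gen B y -> psi1 (gmul x y) = gmul (psi1 x) (psi1 y)) ->
  (forall x y, gen B x -> gen B y -> psi2 (gmul x y) = gmul (psi2 x) (psi2 y)) ->
  (forall x, B x -> psi1 x = psi2 x) -> forall x, gen B x -> psi1 x = psi2 x.
Proof.
  intros H1 H2 HB.
  assert (One : forall psi : G -> H, (forall x y, gen B x -> gen B y -> psi (gmul x y) = gmul (psi x) (psi y)) -> psi gone = gone).
  { intros psi Hp. apply (gcancel_l H (psi gone)). rewrite <- Hp by constructor. rewrite gmul1g, gmulg1. reflexivity. }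
  assert (Inv : forall psi : G -> H, (forall x y, gen B x -> gen B y -> psi (gmul x y) = gmul (psi x) (psi y)) ->
                forall x, gen B x -> psi (ginv x) = ginv (psi x)).
  { intros psi Hp x Hx. apply ginv_uniq. rewrite <- Hp by (try apply gen_inv; auto). rewrite gmulgV. apply One; auto. }
  intros x Hx. induction Hx.
  - auto.
  - rewrite One, One; auto.
  - rewrite H1, H2, IHHx1, IHHx2; auto.
  - rewrite Inv, Inv, IHHx; auto.
Qed.


Theorem corollary3p16 (n k : nat) (m : nat -> nat) (G : Grp) (e h : nat -> G) :
  1 <= k ->
  (forall i, 1 <= i <= k -> 2 <= m i) ->
  is_presented G k n m e h ->
  ~ is_cyclic G ->
  ~ iso_Z2_free_Z2 G ->
  let F := gen (fun x => S1 k m e x \/ S2 k n m e h x) in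
  is_free_subgroup F /\ has_index F (prod_m m k).
Proof.
  intros Hk Hm2 Hpres _ _ F.
  assert (Hm : forall i, 1 <= i <= k -> 0 < m i) by (intros i Hi; specialize (Hm2 i Hi); lia).
  pose proof Hpres as [Hrel [Hex Huniq]].
  assert (Hdm : forall j, 1 <= j <= k -> gpow (G := Agrp k m Hm) (Adelta k m j) (m j) = gone).
  { intros j Hj. apply A_ext; intro i. rewrite Agrp_pow_delta, (Agrp_one k m Hm).
    destruct (i =? j) eqn:E.
    - apply Nat.eqb_eq in E; subst. rewrite nz_in; auto. apply Nat.Div0.mod_same.
    - apply nz_0. }
  destruct (Hex (Agrp k m Hm) (fun j => Adelta k m j) (fun _ => gone)) as [phi [Hphi [Hphie Hphih]]].
  { exact Hdm. }
  pose (uof := fun (a : Agrp k m Hm) i => m i - av a i).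
  pose (rt := fun (a : Agrp k m Hm) => ginv (prod_down e (uof a) 0 k)).
  pose (cp := fun (x : G) (a : Agrp k m Hm) => gmul (ginv (rt (gmul (phi x) a))) (gmul x (rt a))).
  pose (Xel := fun t (b : Agrp k m Hm) => gconj (g_xi e k t (uof b)) (f_lam e t (uof b))).
  assert (uof_rng : forall a i, 1 <= i <= k -> 1 <= uof a i <= m i).
  { intros a i Hi. unfold uof. assert (av a i < m i) by (apply av_lt; auto). lia. }
  assert (phi_pd : forall u, phi (prod_down e u 0 k) = prod_down (G := Agrp k m Hm) (fun t => Adelta k m t) u 0 k).
  { intro u. rewrite (hom_pd _ _ phi) by auto. apply pd_ext_e. intros i Hi; apply Hphie; lia. }
  assert (phi_rt : forall a, phi (rt a) = a).
  { intro a. unfold rt. rewrite (hom_inv _ _ phi Hphi), phi_pd. apply A_ext; intro i.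
    rewrite Agrp_inv, A_pd_delta.
    destruct ((1 <=? i) && (i <=? k)) eqn:E.
    - apply andb_true_iff in E; destruct E as [E1 E2]; apply Nat.leb_le in E1, E2.
      rewrite !nz_in by lia. unfold uof. assert (av a i < m i) by (apply av_lt; auto; lia).
      destruct (av a i) eqn:Ea.
      + rewrite Nat.sub_0_r, Nat.Div0.mod_same, Nat.sub_0_r, Nat.Div0.mod_same. reflexivity.
      + rewrite (Nat.mod_small (m i - S n0)) by lia. rewrite Nat.mod_small; lia.
    - rewrite nz_0, av_out. rewrite nz_out; auto.
      all: intro Hc; apply andb_false_iff in E; destruct E as [E|E]; apply Nat.leb_gt in E; lia. }
  assert (rt_zero : rt gone = gone).
  { unfold rt. rewrite pd_ones. apply ginv_one. intros i Hi. unfold uof. rewrite (Agrp_one k m Hm), Nat.sub_0_r.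
    apply Hrel; lia. }
  assert (phi_F : forall x, F x -> phi x = gone).
  { intros x Hx. unfold F in Hx. induction Hx as [x [HS|HS]| | x y _ IH1 _ IH2 | x _ IH].
    - destruct HS as [t [u [_ [_ [_ [_ [_ Ex]]]]]]]. subst x. unfold f_lam.
      rewrite (hom_gconj _ _ phi) by auto. rewrite (hom_gcomm _ _ phi) by auto.
      rewrite gcomm_abel by apply Agrp_comm. apply gconj_1.
    - destruct HS as [l [i [Hl [_ Ex]]]]. subst x. rewrite (hom_gconj _ _ phi), Hphih by auto. apply gconj_1.
    - apply hom_one; auto.
    - rewrite Hphi, IH1, IH2. apply gmul1g.
    - rewrite (hom_inv _ _ phi Hphi), IH. apply ginv_one. }
  assert (Xel_F : forall t b, 1 <= t <= k -> F (Xel t b)).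
  { intros t b Ht. unfold F.
    destruct (Nat.eq_dec (av b t) 0) as [Hb0|Hb0].
    - assert (E : gpow (e t) (uof b t) = gone) by (unfold uof; rewrite Hb0, Nat.sub_0_r; apply Hrel; auto).
      unfold Xel, f_lam. rewrite E, gcomm_1l, gconj_1. apply gen_one.
    - destruct (classic (exists i, 1 <= i <= t - 1 /\ av b i <> 0)) as [[i [Hi Hbi]]|Hno].
      + apply gen_in. left. exists t, (uof b).
        assert (av b t < m t) by (apply av_lt; auto).
        assert (av b i < m i) by (apply av_lt; [lia|apply Hm; lia]).
        split; [lia|]. split; [intros; apply uof_rng; lia|].
        split; [exists i; split; auto; unfold uof; lia|].
        split; [unfold uof; lia|]. split; [intros; apply uof_rng; lia|]. reflexivity.
      + assert (E : prod_down e (uof b) 0 (t - 1) = gone).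
        { apply pd_ones. intros i Hi. destruct (Nat.eq_dec (av b i) 0) as [Z|Z].
          - unfold uof. rewrite Z, Nat.sub_0_r. apply Hrel; lia.
          - exfalso; apply Hno; exists i; split; auto; lia. }
        unfold Xel, f_lam. rewrite E, gcomm_1r, gconj_1. apply gen_one. }
  assert (cp_one : forall a, cp gone a = gone).
  { intro a. unfold cp. rewrite (hom_one _ _ phi Hphi), gmul1g, gmul1g, gmulVg. reflexivity. }
  assert (cp_mul : forall x y a, cp (gmul x y) a = gmul (cp x (gmul (phi y) a)) (cp y a)).
  { intros x y a. unfold cp. rewrite Hphi, <- (gmulA (Agrp k m Hm)). gnorm. reflexivity. }
  assert (cp_inv : forall x a, cp (ginv x) a = ginv (cp x (gmul (phi (ginv x)) a))).
  { intros x a. unfold cp. rewrite (hom_inv _ _ phi Hphi), (gKr (Agrp k m Hm)). gnorm. reflexivity. }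
  assert (cp_h : forall l b, 1 <= l <= 2 * n -> cp (h l) b = gconj (prod_down e (uof b) 0 k) (h l)).
  { intros l b Hl. unfold cp, rt. rewrite Hphih, (gmul1g (Agrp k m Hm)), ginv_inv by auto. reflexivity. }
  assert (key1 : forall t b, 1 <= t <= k ->
     cp (e t) b = gmul (Xel t (gmul (g := Agrp k m Hm) (Adelta k m t) b)) (ginv (Xel t b))).
  { intros t b Ht. unfold cp, Xel, rt, g_xi, f_lam. rewrite Hphie by auto.
    destruct t as [|t']; [lia|]. replace (S t' - 1) with t' by lia.
    rewrite (pd_split _ e _ 0 (S t') k) by lia. rewrite (pd_split _ e (uof b) 0 (S t') k) by lia.
    rewrite !(pd_step _ e _ 0 t') by lia.
    rewrite (pd_ext _ e (uof (gmul (g := Agrp k m Hm) (Adelta k m (S t')) b)) (uof b) (S t') k).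
    2: { intros i Hi. unfold uof. rewrite A_delta_mul_other by lia. reflexivity. }
    rewrite (pd_ext _ e (uof (gmul (g := Agrp k m Hm) (Adelta k m (S t')) b)) (uof b) 0 t').
    2: { intros i Hi. unfold uof. rewrite A_delta_mul_other by lia. reflexivity. }
    assert (EE : gpow (e (S t')) (uof b (S t')) =
                 gmul (gpow (e (S t')) (uof (gmul (g := Agrp k m Hm) (Adelta k m (S t')) b) (S t'))) (e (S t'))).
    { unfold uof. rewrite A_delta_mul_self by auto.
      assert (av b (S t') < m (S t')) by (apply av_lt; auto).
      destruct (Nat.eq_dec (1 + av b (S t')) (m (S t'))) as [Eq|Ne].
      - rewrite Eq, Nat.Div0.mod_same, Nat.sub_0_r, Hrel by auto.
        replace (m (S t') - av b (S t')) with 1 by lia. simpl. rewrite gmulg1, gmul1g. reflexivity.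
      - rewrite Nat.mod_small by lia. replace (m (S t') - av b (S t')) with (S (m (S t') - (1 + av b (S t')))) by lia.
        apply gpow_succ_r. }
    rewrite EE. unfold gconj, gcomm. gnorm. reflexivity. }
  assert (cover : forall x a, F (cp x a)).
  { intro x. apply (generation G k n m e h Hpres (fun x => forall a, F (cp x a))).
    - intro a. rewrite cp_one. apply gen_one.
    - intros x1 y1 H1 H2 a. rewrite cp_mul. apply gen_mul; [apply H1|apply H2].
    - intros x1 H1 a. rewrite cp_inv. apply gen_inv; apply H1.
    - intros j Hj a. rewrite key1 by auto. apply gen_mul. apply Xel_F; auto. apply gen_inv; apply Xel_F; auto.
    - intros l Hl a. rewrite cp_h by auto. apply gen_in. right. exists l, (uof a). split; auto. }
  assert (Xel_zero : forall t b, 1 <= t <= k -> av b t = 0 -> Xel t b = gone).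
  { intros t b Ht Hb0.
    assert (E : gpow (e t) (uof b t) = gone) by (unfold uof; rewrite Hb0, Nat.sub_0_r; apply Hrel; auto).
    unfold Xel, f_lam. rewrite E, gcomm_1l, gconj_1. reflexivity. }
  split.
  2:{ destruct (box_enum k m Hm) as [dec [Hs [Hi Hn]]].
      pose (decA := fun i => (exist (fun a => forall j, nz k m j (a j) = a j) (dec i) (Hn i) : Acar k m)).
      exists (fun i => rt (decA i)). split.
      - intro x. destruct (Hs (av (phi x))) as [i [Hi' Ei]].
        { intro j. apply av_norm. }
        exists i. split; auto.
        assert (E : decA i = phi x) by (apply A_ext; intro j; unfold decA, av; simpl; rewrite Ei; reflexivity).
        rewrite E. specialize (cover x gone). unfold cp in cover.
        rewrite rt_zero, (gmulg1 (Agrp k m Hm)), gmulg1 in cover. exact cover.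
      - intros i j Hi' Hj' HF. apply Hi; auto.
        apply phi_F in HF. rewrite Hphi, (hom_inv _ _ phi Hphi), !phi_rt in HF.
        apply ginv_uniq in HF. rewrite ginv_inv in HF.
        apply (f_equal (fun a : Acar k m => av a)) in HF. unfold decA, av in HF; simpl in HF. symmetry; exact HF. }
  exists (fun x => S1 k m e x \/ S2 k n m e h x). split; [intro x; unfold F; tauto|].
  intros H phiB. split; [| intros psi1 psi2; apply gen_uniq].
  pose (Psi := fun t (b : Agrp k m Hm) =>
    match excluded_middle_informative (av b t <> 0 /\ exists i, 1 <= i <= t - 1 /\ av b i <> 0) with
    | left _ => phiB (Xel t b) | right _ => (gone : H) end).
  pose (d := fun l (b : Agrp k m Hm) => phiB (cp (h l) b)).
  destruct (Hex (Wgrp (Agrp k m Hm) H) (fun t => (Adelta k m t, cob (Psi t) (Adelta k m t)))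
                (fun l => (gone, d l))) as [Phi [HPhi [HPhie HPhih]]].
  { intros j Hj. rewrite W_pow_cob, Hdm by auto. rewrite W_one. f_equal.
    apply functional_extensionality; intro z. unfold cob. rewrite (gmul1g (Agrp k m Hm)). apply gmulgV. }
  assert (fstPhi : forall x, fst (Phi x) = phi x).
  { apply (Huniq (Agrp k m Hm) (fun x => fst (Phi x)) phi); auto.
    - intros x y. rewrite HPhi. reflexivity.
    - intros j Hj. rewrite HPhie, Hphie by auto. reflexivity.
    - intros l Hl. rewrite HPhih, Hphih by auto. reflexivity. }
  assert (Psi_triv : forall t b, (forall i, 1 <= i <= t - 1 -> av b i = 0) -> Psi t b = gone).
  { intros t b Hb. unfold Psi. destruct (excluded_middle_informative _) as [[_ [i [Hi Hbi]]]|_]; auto.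
    exfalso; apply Hbi, Hb; auto. }
  assert (Phi_pow : forall t s w, 1 <= t <= k -> snd (Phi (gpow (e t) s)) w =
     gmul (Psi t (gmul (gpow (G := Agrp k m Hm) (Adelta k m t) s) w)) (ginv (Psi t w))).
  { intros t s w Ht. rewrite (hom_pow _ _ Phi HPhi), HPhie by auto. rewrite W_pow_cob. reflexivity. }
  assert (L2 : forall u j, j <= k -> forall z, (forall i, 1 <= i <= j -> av (gmul (phi (prod_down e u 0 j)) z) i = 0) ->
                snd (Phi (prod_down e u 0 j)) z = gone).
  { intros u j. induction j; intros Hj z Hz.
    - cbn [prod_down]. rewrite (hom_one _ _ Phi HPhi). reflexivity.
    - rewrite pd_step by lia. rewrite HPhi. rewrite W_snd_mul.
      assert (Hz' : forall i, 1 <= i <= j -> av (gmul (phi (prod_down e u 0 j)) z) i = 0).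
      { intros i Hi. transitivity (av (gmul (phi (prod_down e u 0 (S j))) z) i); [| apply Hz; lia].
        rewrite pd_step, Hphi, (hom_pow _ _ phi Hphi), Hphie by lia.
        rewrite <- (gmulA (Agrp k m Hm)). rewrite A_pow_delta_mul_other by lia. reflexivity. }
      rewrite IHj by (auto; lia). rewrite gmulg1, fstPhi.
      rewrite Phi_pow by lia. rewrite !Psi_triv. apply gmulgV.
      all: intros i Hi; rewrite ?A_pow_delta_mul_other by lia; apply Hz'; lia. }
  assert (Gamma : forall b, snd (Phi (rt b)) gone = gone).
  { intro b. unfold rt. rewrite (hom_inv _ _ Phi HPhi), W_snd_inv.
    rewrite L2. apply ginv_one. lia.
    intros i Hi. rewrite fstPhi, (gKr (Agrp k m Hm)). apply Agrp_one. }
  pose (psi := fun x => snd (Phi x) (gone : Agrp k m Hm)).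
  assert (key2 : forall x a, psi (cp x a) = snd (Phi x) a).
  { intros x a. unfold psi, cp. rewrite HPhi, HPhi. rewrite W_snd_mul, W_snd_mul, W_fst_mul.
    rewrite !fstPhi, !phi_rt, Gamma. rewrite (hom_inv _ _ Phi HPhi), W_snd_inv, fstPhi, phi_rt.
    rewrite !(gmulg1 (Agrp k m Hm)), (gmulVg (Agrp k m Hm)), Gamma, ginv_one, gmul1g, gmulg1. reflexivity. }
  assert (psi_one : psi gone = gone) by (unfold psi; rewrite (hom_one _ _ Phi HPhi); reflexivity).
  assert (psi_mul : forall x y, phi y = gone -> psi (gmul x y) = gmul (psi x) (psi y)).
  { intros x y Hy. unfold psi. rewrite HPhi, W_snd_mul, fstPhi, Hy, (gmul1g (Agrp k m Hm)). reflexivity. }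
  assert (psi_inv : forall x, phi x = gone -> psi (ginv x) = ginv (psi x)).
  { intros x Hx. apply ginv_uniq. rewrite <- psi_mul. rewrite gmulgV. exact psi_one.
    rewrite (hom_inv _ _ phi Hphi), Hx. apply ginv_one. }
  assert (psi_Xel : forall t b, 1 <= t <= k -> psi (Xel t b) = Psi t b).
  { intros t b Ht.
    assert (step : forall b0, psi (Xel t b0) = Psi t b0 ->
               psi (Xel t (gmul (g := Agrp k m Hm) (Adelta k m t) b0)) = Psi t (gmul (g := Agrp k m Hm) (Adelta k m t) b0)).
    { intros b0 IH. pose proof (key2 (e t) b0) as K2. rewrite key1 in K2 by auto.
      rewrite psi_mul in K2; [| rewrite (hom_inv _ _ phi Hphi), (phi_F _ (Xel_F t b0 Ht)); apply ginv_one].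
      rewrite psi_inv in K2; [| apply phi_F, Xel_F; auto].
      rewrite IH, HPhie in K2 by auto. cbn [snd] in K2. unfold cob in K2.
      apply (f_equal (fun w => gmul w (Psi t b0))) in K2. rewrite <- !gmulA, !gmulVg, !gmulg1 in K2. exact K2. }
    assert (base : forall s b0, av b0 t = 0 ->
              psi (Xel t (gmul (gpow (G := Agrp k m Hm) (Adelta k m t) s) b0)) =
              Psi t (gmul (gpow (G := Agrp k m Hm) (Adelta k m t) s) b0)).
    { induction s; intros b0 Hb0.
      - cbn [gpow]. rewrite (gmul1g (Agrp k m Hm)). rewrite Xel_zero by auto. rewrite psi_one.
        unfold Psi. destruct (excluded_middle_informative _) as [[Hc _]|_]; auto. contradiction.
      - cbn [gpow]. rewrite <- (gmulA (Agrp k m Hm)). apply step, IHs; auto. }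
    pose (b' := mkA k m (fun i => if i =? t then 0 else av b i)).
    replace b with (gmul (gpow (G := Agrp k m Hm) (Adelta k m t) (av b t)) b').
    - apply base. unfold b'. rewrite av_mkA, Nat.eqb_refl. apply nz_0.
    - apply A_ext; intro i. rewrite Agrp_mul, Agrp_pow_delta. unfold b'. rewrite av_mkA, nz_addl, nz_addr.
      destruct (i =? t) eqn:E.
      + apply Nat.eqb_eq in E; subst. rewrite Nat.add_0_r. apply av_norm.
      + apply av_norm. }
  exists psi. split.
  - intros x y Hx Hy. apply psi_mul. apply phi_F. exact Hy.
  - intros x [HS|HS].
    + destruct HS as [t [u [Ht [Hlo [Hex' [Hut [Hhi Ex]]]]]]]. subst x.
      pose (b := mkA k m (fun i => m i - u i)).
      assert (Eu : forall i, 1 <= i <= k -> uof b i = u i).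
      { intros i Hi. unfold uof, b. rewrite av_mkA, nz_in by auto.
        assert (1 <= u i <= m i).
        { destruct (lt_eq_lt_dec i t) as [[Hlt|Heq]|Hgt]; [apply Hlo; lia | subst; specialize (Hm2 t Hi); lia | apply Hhi; lia]. }
        rewrite Nat.mod_small by lia. lia. }
      assert (EX : Xel t b = gconj (g_xi e k t u) (f_lam e t u)).
      { unfold Xel, g_xi, f_lam.
        rewrite (pd_ext _ e (uof b) u t k) by (intros; apply Eu; lia).
        rewrite (pd_ext _ e (uof b) u 0 (t-1)) by (intros; apply Eu; lia).
        rewrite (Eu t) by lia. reflexivity. }
      rewrite <- EX, psi_Xel by lia. unfold Psi. destruct (excluded_middle_informative _) as [_|Hc]; auto.
      exfalso; apply Hc. split.
      * unfold b. rewrite av_mkA, nz_in by lia. specialize (Hm2 t ltac:(lia)). rewrite Nat.mod_small by lia. lia.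
      * destruct Hex' as [i [Hi Hui]]. exists i. split; auto. unfold b. rewrite av_mkA, nz_in by lia.
        assert (1 <= u i <= m i) by (apply Hlo; auto). rewrite Nat.mod_small by lia. lia.
    + destruct HS as [l [iv [Hl [Hiv Ex]]]]. subst x.
      pose (b := mkA k m (fun j => m j - iv j)).
      assert (EX : cp (h l) b = gconj (prod_down e iv 0 k) (h l)).
      { rewrite cp_h by auto. f_equal. apply pd_ext. intros j Hj. unfold uof, b. rewrite av_mkA, nz_in by lia.
        specialize (Hiv j ltac:(lia)). rewrite Nat.mod_small by lia. lia. }
      rewrite <- EX, key2. rewrite HPhih by auto. reflexivity.
Qed.
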